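(* For every $0<R<\frac12\sqrt{\frac{3}{8\pi}}$ the map $T$ sends $\mathcal{C}^0_R$ into $\mathcal{C}^0_R$.
   Context: Let $\rho_*(R)=\frac{16\pi}{3}R^2$ and $\mathcal{C}^0_R=\{(m,\rho):[0,R]\to\mathbb{R}^2 \text{ continuous}:\ 0\le m(r)\le \frac{4\pi}{3}\rho_*(R)r^3,\ 0\le\rho(r)\le\rho_*(R)\}$. Define $T[m,\rho]=(M[\rho],P[m,\rho])$ with $M[\rho](r)=\int_0^r 4\pi s^2\rho(s)\,ds$ and $P[m,\rho](r)=\int_r^R \frac{1+2\rho(s)}{1-\frac{8\pi}{3}s^2-\frac{2m(s)}{s}}\,\frac{4\pi s}{3}\Big[1+3\rho(s)+\frac{3m(s)}{4\pi s^3}\Big]ds$. *)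

(* Defs.v *)
From Stdlib Require Import Reals Lra ClassicalEpsilon.
Open Scope R_scope.

(* Total Riemann integral: the Riemann integral of f over [a,b] when f is
   Riemann integrable there (an unspecified value otherwise; RiemannInt is proof-irrelevant; the main theorem also asserts
   integrability, so this default is never used in the conclusion). *)
Definition Rint (f : R -> R) (a b : R) : R :=
  epsilon (inhabits 0)
    (fun v => exists pr : Riemann_integrable f a b, RiemannInt pr = v).

Definition cont_on (f : R -> R) (a b : R) : Prop :=
  forall x, a <= x <= b -> continue_in f (fun y => a <= y <= b) x.

Definition rho_star (Rr : R) : R := 16 * PI / 3 * Rr ^ 2.

Definition C0 (Rr : R) (m rho : R -> R) : Prop :=
  cont_on m 0 Rr /\ cont_on rho 0 Rr /\
  (forall r, 0 <= r <= Rr ->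
     0 <= m r <= 4 * PI / 3 * rho_star Rr * r ^ 3 /\
     0 <= rho r <= rho_star Rr).

Definition M_integrand (rho : R -> R) (s : R) : R := 4 * PI * s ^ 2 * rho s.

Definition P_integrand (m rho : R -> R) (s : R) : R :=
  (1 + 2 * rho s) / (1 - 8 * PI / 3 * s ^ 2 - 2 * m s / s)
  * (4 * PI * s / 3)
  * (1 + 3 * rho s + 3 * m s / (4 * PI * s ^ 3)).

Definition M_op (rho : R -> R) (r : R) : R := Rint (M_integrand rho) 0 r.

Definition P_op (Rr : R) (m rho : R -> R) (r : R) : R :=
  Rint (P_integrand m rho) r Rr.

(* Main.v *)
Require Import Defs.
From Stdlib Require Import Reals Lra Psatz ClassicalEpsilon.
From Coquelicot Require Import Coquelicot.
Open Scope R_scope.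
Lemma alg_bound (P R s x y : R) : 0 < P -> 0 < 8*P/3*R^2 < /4 -> 0 < s <= R ->
  0 <= x <= 2*(8*P/3*R^2) -> 0 <= y <= 8*P/3*(8*P/3*R^2)*s^3 ->
  0 < 1 - 8*P/3*s^2 - 2*y/s /\
  0 <= (1+2*x)/(1 - 8*P/3*s^2 - 2*y/s) * (4*P*s/3) * (1 + 3*x + 3*y/(4*P*s^3)) <=
   (1+4*(8*P/3*R^2))*(1+8*(8*P/3*R^2))*(4*P*s/3)*(1+5/2*(8*P/3*s^2)).
Proof.
  intros HP Ha Hs Hx Hy.
  set (a := 8*P/3*R^2) in *.
  assert (hs2 : s^2 <= R^2) by nra.
  set (u := 8*P/3*s^2).
  assert (hu : 0 <= u <= a) by (unfold u, a; split; nra).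
  assert (h1 : 0 <= y/s <= a*u).
  { split. apply Rmult_le_pos; [lra| apply Rlt_le, Rinv_0_lt_compat; lra].
    apply (Rmult_le_reg_r s); [lra|].
    replace (y/s*s) with y by (field; lra). unfold u. replace (a*(8*P/3*s^2)*s) with (8*P/3*a*s^3) by ring. lra. }
  assert (h2 : 0 <= 3*y/(4*P*s^3) <= 2*a).
  { assert (0 < 4*P*s^3) by (apply Rmult_lt_0_compat; [lra| apply pow_lt; lra]).
    split. apply Rmult_le_pos; [lra| apply Rlt_le, Rinv_0_lt_compat; lra].
    apply (Rmult_le_reg_r (4*P*s^3)); [lra|].
    replace (3*y/(4*P*s^3)*(4*P*s^3)) with (3*y) by (field; lra). replace (2*a*(4*P*s^3)) with (3*(8*P/3*a*s^3)) by field. lra. }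
  replace (2*y/s) with (2*(y/s)) by (unfold Rdiv; ring).
  fold u.
  set (D := 1 - u - 2*(y/s)).
  assert (hD : 1 - u - 2*a*u <= D) by (unfold D; nra).
  assert (hD1 : 1 <= D*(1+5/2*u)) by nra.
  assert (hD0 : 0 < D) by nra.
  split; [exact hD0|].
  assert (hinv : 0 <= 1/D <= 1+5/2*u).
  { split. apply Rlt_le, Rdiv_lt_0_compat; lra.
    apply (Rmult_le_reg_r D); [lra|]. replace (1/D*D) with 1 by (field; lra). lra. }
  replace ((1+2*x)/D) with ((1+2*x)*(1/D)) by (field; lra).
  assert (0 <= 4*P*s/3) by (apply Rmult_le_pos; [nra|lra]).
  split.
  - apply Rmult_le_pos; [apply Rmult_le_pos|]; try apply Rmult_le_pos; lra.
  - replace ((1+4*a)*(1+8*a)*(4*P*s/3)*(1+5/2*u)) with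
      (((1+4*a)*(1+5/2*u))*(4*P*s/3)*(1+8*a)) by ring.
    apply Rmult_le_compat; try lra.
    + apply Rmult_le_pos; [apply Rmult_le_pos|]; lra.
    + apply Rmult_le_compat_r; [lra|].
      apply Rmult_le_compat; lra.
Qed.
Lemma Rint_eq f a b : ex_RInt f a b -> Rint f a b = RInt f a b.
Proof.
  intro H. pose (pr := ex_RInt_Reals_0 _ _ _ H).
  unfold Rint.
  destruct (epsilon_spec (inhabits 0) (fun v => exists pr : Riemann_integrable f a b, RiemannInt pr = v)
    (ex_intro _ (RiemannInt pr) (ex_intro _ pr eq_refl))) as [pr' E].
  rewrite <- E. symmetry. apply RInt_Reals.
Qed.

Lemma cont_ex f a b : (forall x, continuity_pt f x) -> ex_RInt f a b.
Proof.
  intro H. apply (ex_RInt_continuous (V:=R_CompleteNormedModule)). intros z _.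
  apply continuity_pt_filterlim, H.
Qed.

Lemma Rint_of f g a b : (forall x, continuity_pt g x) ->
  (forall x, Rmin a b <= x <= Rmax a b -> f x = g x) ->
  ex_RInt f a b /\ Rint f a b = RInt g a b.
Proof.
  intros Hg E.
  assert (ex_RInt f a b).
  { apply ex_RInt_ext with g. intros x Hx. symmetry; apply E; lra. now apply cont_ex. }
  split; auto. rewrite Rint_eq; auto. apply RInt_ext. intros; apply E; lra.
Qed.

Lemma RInt_lip f a b K : (forall x, continuity_pt f x) ->
  (forall t, Rmin a b <= t <= Rmax a b -> Rabs (f t) <= K) ->
  Rabs (RInt f a b) <= K * Rabs (b - a).
Proof.
  intros Hc Hb.
  destruct (Rle_dec a b) as [h|h].
  - rewrite Rmin_left, Rmax_right in Hb by lra.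
    rewrite (Rabs_right (b-a)) by lra. rewrite Rmult_comm.
    apply abs_RInt_le_const; auto. now apply cont_ex.
  - rewrite Rmin_right, Rmax_left in Hb by lra.
    rewrite <- opp_RInt_swap by (now apply cont_ex).
    rewrite (Rabs_left (b-a)) by lra.
    change (opp (RInt f b a)) with (- RInt f b a). rewrite Rabs_Ropp.
    replace (- (b - a)) with (a - b) by ring. rewrite Rmult_comm.
    apply abs_RInt_le_const; auto. lra. now apply cont_ex.
Qed.

Lemma cont_by_bound f x K : 0 <= K -> (forall y, Rabs (f y - f x) <= K * Rabs (y - x)) ->
  continuity_pt f x.
Proof.
  intros HK H eps Heps.
  exists (eps / (K+1)). split. apply Rdiv_lt_0_compat; lra.
  intros y [_ Hy]. simpl in *. unfold R_dist in *.
  eapply Rle_lt_trans. apply H.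
  apply Rle_lt_trans with ((K+1) * Rabs (y - x)).
  apply Rmult_le_compat_r; [apply Rabs_pos|lra].
  apply (Rmult_lt_compat_l (K+1)) in Hy; [|lra].
  replace ((K+1)*(eps/(K+1))) with eps in Hy by (field; lra). lra.
Qed.

Lemma cont_on_by_bound F Rr K : 0 <= K ->
  (forall x y, 0 <= x <= Rr -> 0 <= y <= Rr -> Rabs (F y - F x) <= K * Rabs (y - x)) ->
  cont_on F 0 Rr.
Proof.
  intros HK H x Hx eps Heps.
  exists (eps / (K+1)). split. apply Rdiv_lt_0_compat; lra.
  intros y [[Hy1 _] Hy]. simpl in *. unfold R_dist in *.
  eapply Rle_lt_trans. apply H; auto.
  apply Rle_lt_trans with ((K+1) * Rabs (y - x)).
  apply Rmult_le_compat_r; [apply Rabs_pos|lra].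
  apply (Rmult_lt_compat_l (K+1)) in Hy; [|lra].
  replace ((K+1)*(eps/(K+1))) with eps in Hy by (field; lra). lra.
Qed.

Definition cl (Rr x : R) := Rmax 0 (Rmin Rr x).

Lemma cl_in Rr x : 0 <= Rr -> 0 <= cl Rr x <= Rr.
Proof. intros; unfold cl, Rmax, Rmin; repeat destruct Rle_dec; lra. Qed.
Lemma cl_id Rr x : 0 <= x <= Rr -> cl Rr x = x.
Proof. intros; unfold cl, Rmax, Rmin; repeat destruct Rle_dec; lra. Qed.
Lemma cl_lip Rr x y : 0 <= Rr -> Rabs (cl Rr y - cl Rr x) <= Rabs (y - x).
Proof. intros; unfold cl, Rmax, Rmin; repeat destruct Rle_dec; unfold Rabs; repeat destruct Rcase_abs; lra. Qed.
Lemma cl_le Rr x y : 0 <= Rr -> x <= 0 -> cl Rr y <= Rabs (y - x).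
Proof. intros; unfold cl, Rmax, Rmin; repeat destruct Rle_dec; unfold Rabs; repeat destruct Rcase_abs; lra. Qed.

Lemma ext_cont f Rr : 0 <= Rr -> cont_on f 0 Rr -> forall x, continuity_pt (fun y => f (cl Rr y)) x.
Proof.
  intros HR Hf x eps Heps.
  destruct (Hf (cl Rr x) (cl_in Rr x HR) eps Heps) as [d [Hd H]].
  exists d; split; auto. intros y [_ Hy].
  destruct (Req_dec (cl Rr x) (cl Rr y)) as [E|E].
  { simpl. unfold R_dist. rewrite E, Rminus_diag, Rabs_R0. lra. }
  apply (H (cl Rr y)). split. split; [apply cl_in; auto| exact E].
  simpl in *. unfold R_dist in *. eapply Rle_lt_trans. apply cl_lip; auto. exact Hy.
Qed.

Lemma cc c x : continuity_pt (fun _ => c) x.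
Proof. apply continuity_pt_const. intros ? ?; reflexivity. Qed.
Lemma cid x : continuity_pt (fun y => y) x.
Proof. apply continuity_pt_id. Qed.
Lemma cmul f g x : continuity_pt f x -> continuity_pt g x -> continuity_pt (fun y => f y * g y) x.
Proof. intros; exact (continuity_pt_mult f g x H H0). Qed.
Lemma cadd f g x : continuity_pt f x -> continuity_pt g x -> continuity_pt (fun y => f y + g y) x.
Proof. intros; exact (continuity_pt_plus f g x H H0). Qed.
Lemma csub f g x : continuity_pt f x -> continuity_pt g x -> continuity_pt (fun y => f y - g y) x.
Proof. intros; exact (continuity_pt_minus f g x H H0). Qed.
Lemma cdiv f g x : continuity_pt f x -> continuity_pt g x -> g x <> 0 -> continuity_pt (fun y => f y / g y) x.
Proof. intros; exact (continuity_pt_div f g x H H0 H1). Qed.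
Lemma cpow f n x : continuity_pt f x -> continuity_pt (fun y => f y ^ n) x.
Proof. intros H; induction n; simpl. apply cc. now apply cmul. Qed.

Ltac ct := repeat (first [ apply cc | apply cid | assumption | apply cdiv | apply csub | apply cadd | apply cmul | apply cpow ]).

Lemma int_poly (g G : R -> R) a b :
  (forall x, is_derive G x (g x)) -> (forall x, continuity_pt g x) ->
  RInt g a b = G b - G a.
Proof.
  intros HG Hc. apply is_RInt_unique.
  apply (is_RInt_derive (V:=R_CompleteNormedModule) G g); intros; auto.
  apply continuity_pt_filterlim, Hc.
Qed.

Theorem mainTheorem2 (Rr : R) (m rho : R -> R) :
  0 < Rr -> Rr < / 2 * sqrt (3 / (8 * PI)) ->
  C0 Rr m rho ->
  (forall r, 0 <= r <= Rr ->
     inhabited (Riemann_integrable (M_integrand rho) 0 r) /\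
     inhabited (Riemann_integrable (P_integrand m rho) r Rr)) /\
  C0 Rr (M_op rho) (P_op Rr m rho).
Proof.
  intros HR HRb [Hm [Hr Hb]].
  assert (HPI : 0 < PI) by apply PI_RGT_0.
  assert (HR2 : Rr^2 < /4 * (3/(8*PI))).
  { assert (0 < 3/(8*PI)) by (apply Rdiv_lt_0_compat; lra).
    assert (E : sqrt (3/(8*PI)) * sqrt (3/(8*PI)) = 3/(8*PI)) by (apply sqrt_sqrt; lra).
    assert (0 <= sqrt (3/(8*PI))) by apply sqrt_pos.
    nra. }
  set (a := 8*PI/3*Rr^2).
  assert (Ha : 0 < a < /4).
  { unfold a. split. apply Rmult_lt_0_compat. apply Rdiv_lt_0_compat; lra. apply pow_lt; lra.
    apply Rlt_le_trans with (8*PI/3 * (/4 * (3/(8*PI)))).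
    apply Rmult_lt_compat_l; [apply Rdiv_lt_0_compat; lra| exact HR2].
    right; field; lra. }
  assert (Hrs : rho_star Rr = 2*a) by (unfold rho_star, a; field).
  assert (HR0 : 0 <= Rr) by lra.
  set (mm := fun y => m (cl Rr y)).
  set (rr := fun y => rho (cl Rr y)).
  assert (Hmm : forall x, continuity_pt mm x) by (apply ext_cont; auto).
  assert (Hrr : forall x, continuity_pt rr x) by (apply ext_cont; auto).
  assert (Hbr : forall y, 0 <= rr y <= 2*a).
  { intro y. destruct (Hb (cl Rr y) (cl_in Rr y HR0)) as [_ H2]. rewrite Hrs in H2. exact H2. }
  assert (Hbm : forall t, 0 <= t <= Rr -> 0 <= mm t <= 8*PI/3*a*t^3).
  { intros t Ht. unfold mm. rewrite cl_id by auto.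
    destruct (Hb t Ht) as [H1 _]. rewrite Hrs in H1.
    replace (8*PI/3*a*t^3) with (4*PI/3*(2*a)*t^3) by field. exact H1. }
  set (Bd := fun t => (1+4*a)*(1+8*a)*(4*PI*t/3)*(1+5/2*(8*PI/3*t^2))).
  assert (HP0 : P_integrand mm rr 0 = 0).
  { unfold P_integrand. replace (4*PI*0/3) with 0 by field. ring. }
  assert (HHb : forall t, 0 <= t <= Rr -> 0 <= P_integrand mm rr t <= Bd t).
  { intros t Ht. destruct (Req_dec t 0) as [E|E].
    { subst t. rewrite HP0. unfold Bd. replace (4*PI*0/3) with 0 by field. lra. }
    destruct (alg_bound PI Rr t (rr t) (mm t)) as [_ H2]; auto; try lra; try (apply Hbm; lra). }
  set (KB := (1+4*a)*(1+8*a)*(4*PI/3)*(1+5/2*a)).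
  assert (HKB : 0 <= KB) by (unfold KB; apply Rmult_le_pos; [apply Rmult_le_pos; [apply Rmult_le_pos|]|]; lra).
  assert (HBK : forall t, 0 <= t <= Rr -> Bd t <= KB * t).
  { intros t Ht. unfold Bd, KB.
    assert (8*PI/3*t^2 <= a) by (unfold a; apply Rmult_le_compat_l; [apply Rlt_le, Rdiv_lt_0_compat; lra| nra]).
    replace ((1+4*a)*(1+8*a)*(4*PI/3)*(1+5/2*a)*t) with ((1+4*a)*(1+8*a)*(4*PI*t/3)*(1+5/2*a)) by field.
    apply Rmult_le_compat_l. apply Rmult_le_pos; [apply Rmult_le_pos|]; try lra. apply Rmult_le_pos; [nra|lra].
    lra. }
  set (H := fun s => P_integrand mm rr (cl Rr s)).
  assert (Hcl : forall x, continuity_pt (cl Rr) x).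
  { intro x. apply cont_by_bound with 1. lra. intro y. rewrite Rmult_1_l. apply cl_lip; auto. }
  assert (HHc : forall x, continuity_pt H x).
  { intro x. destruct (Rle_dec x 0) as [hx|hx].
    - apply cont_by_bound with KB; auto. intro y.
      assert (ex : cl Rr x = 0).
      { pose proof (cl_le Rr x x HR0 hx). pose proof (cl_in Rr x HR0). rewrite Rminus_diag, Rabs_R0 in H0. lra. }
      unfold H. rewrite ex, HP0, Rminus_0_r.
      pose proof (cl_in Rr y HR0). pose proof (HHb _ H0). pose proof (HBK _ H0).
      pose proof (cl_le Rr x y HR0 hx).
      rewrite Rabs_right by lra. apply Rle_trans with (KB * cl Rr y). lra.
      apply Rmult_le_compat_l; auto.
    - apply (continuity_pt_comp (cl Rr) (P_integrand mm rr)); auto.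
      set (t := cl Rr x).
      assert (Ht : 0 < t <= Rr).
      { unfold t, cl, Rmax, Rmin; repeat destruct Rle_dec; lra. }
      destruct (alg_bound PI Rr t (rr t) (mm t)) as [HD _]; auto; try lra; try (apply Hbm; lra).
      unfold P_integrand.
      repeat (first [ apply Hrr | apply Hmm | apply cc | apply cid | apply cdiv | apply csub | apply cadd | apply cmul | apply cpow ]).
      all: try lra.
      assert (0 < t^3) by (apply pow_lt; lra). nra. }
  set (Gm := fun s => 4*PI*s^2*rr s).
  assert (HGc : forall x, continuity_pt Gm x).
  { intro x. unfold Gm. repeat (first [ apply Hrr | apply cc | apply cid | apply cmul | apply cpow ]). }
  assert (EM : forall s, 0 <= s <= Rr -> M_integrand rho s = Gm s).
  { intros s Hs. unfold M_integrand, Gm, rr. rewrite (cl_id Rr s Hs). reflexivity. }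
  assert (EP : forall s, 0 <= s <= Rr -> P_integrand m rho s = H s).
  { intros s Hs. unfold H. rewrite (cl_id Rr s Hs). unfold P_integrand, mm, rr. rewrite (cl_id Rr s Hs). reflexivity. }
  assert (IM : forall r, 0 <= r <= Rr -> ex_RInt (M_integrand rho) 0 r /\ Rint (M_integrand rho) 0 r = RInt Gm 0 r).
  { intros r Hr0. apply Rint_of; auto. intros x Hx. apply EM.
    rewrite Rmin_left, Rmax_right in Hx; lra. }
  assert (IP : forall r, 0 <= r <= Rr -> ex_RInt (P_integrand m rho) r Rr /\ Rint (P_integrand m rho) r Rr = RInt H r Rr).
  { intros r Hr0. apply Rint_of; auto. intros x Hx. apply EP.
    rewrite Rmin_left, Rmax_right in Hx; lra. }
  assert (ChG : forall x y, RInt Gm 0 y - RInt Gm 0 x = RInt Gm x y).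
  { intros x y. rewrite <- (RInt_Chasles Gm 0 x y); try apply cont_ex; auto.
    change plus with Rplus. ring. }
  assert (ChH : forall x y, RInt H y Rr - RInt H x Rr = RInt H y x).
  { intros x y. rewrite <- (RInt_Chasles H y x Rr); try apply cont_ex; auto.
    change plus with Rplus. ring. }
  split.
  - intros r Hr0. split; constructor; apply ex_RInt_Reals_0; [apply IM|apply IP]; auto.
  - split; [|split].
    + apply cont_on_by_bound with (4*PI*Rr^2*(2*a)).
      apply Rmult_le_pos; [nra|lra].
      intros x y Hx Hy. unfold M_op. rewrite (proj2 (IM x Hx)), (proj2 (IM y Hy)), ChG.
      
      apply RInt_lip; auto. intros t Ht.
      assert (0 <= t <= Rr) by (unfold Rmin, Rmax in Ht; repeat destruct Rle_dec; lra).
      unfold Gm. specialize (Hbr t). rewrite Rabs_right.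
      assert (t^2 <= Rr^2) by nra.
      apply Rmult_le_compat; try lra. apply Rmult_le_pos; nra. apply Rmult_le_compat_l; lra. apply Rle_ge. apply Rmult_le_pos; nra.
    + apply cont_on_by_bound with (KB*Rr). nra.
      intros x y Hx Hy. unfold P_op. rewrite (proj2 (IP x Hx)), (proj2 (IP y Hy)), ChH.
      rewrite (Rabs_minus_sym y x). apply RInt_lip; auto. intros t Ht.
      assert (0 <= t <= Rr) by (unfold Rmin, Rmax in Ht; repeat destruct Rle_dec; lra).
      unfold H. pose proof (cl_in Rr t HR0). pose proof (HHb _ H1). pose proof (HBK _ H1).
      rewrite Rabs_right by lra. apply Rle_trans with (KB * cl Rr t). lra.
      apply Rmult_le_compat_l; lra.
    + intros r Hr0. unfold M_op, P_op. rewrite (proj2 (IM r Hr0)), (proj2 (IP r Hr0)).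
      split; split.
      * apply RInt_ge_0; try lra. apply cont_ex; auto. intros x Hx. unfold Gm.
        specialize (Hbr x). apply Rmult_le_pos; nra.
      * apply Rle_trans with (RInt (fun s => 4*PI*s^2*(2*a)) 0 r).
        apply RInt_le; try lra; try (apply cont_ex; auto).
        intros x. repeat (first [ apply cc | apply cid | apply cmul | apply cpow ]).
        intros x Hx. unfold Gm. specialize (Hbr x). apply Rmult_le_compat_l; nra.
        rewrite (int_poly _ (fun s => 4*PI*(2*a)*s^3/3)).
        rewrite Hrs. right. field.
        intros x. auto_derive; auto. simpl. field.
        intros x. repeat (first [ apply cc | apply cid | apply cmul | apply cpow ]).
      * apply RInt_ge_0; try lra. apply cont_ex; auto. intros x Hx. unfold H.
        apply HHb. apply cl_in; auto.
      * assert (E1 : ex_RInt H 0 r) by (apply cont_ex; auto).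
        assert (E2 : ex_RInt H r Rr) by (apply cont_ex; auto).
        assert (C : RInt H 0 r + RInt H r Rr = RInt H 0 Rr).
        { rewrite <- (RInt_Chasles H 0 r Rr); auto. }
        assert (P1 : 0 <= RInt H 0 r).
        { apply RInt_ge_0; try lra; auto. intros x Hx. unfold H. apply HHb. apply cl_in; auto. }
        assert (P2 : RInt H 0 Rr <= RInt Bd 0 Rr).
        { apply RInt_le; try lra; try (apply cont_ex; auto).
          intros x. unfold Bd. repeat (first [ apply cc | apply cid | apply cdiv | apply cadd | apply cmul | apply cpow ]).
          intro; lra.
          intros x Hx. unfold H. rewrite cl_id by lra. apply HHb; lra. }
        assert (P3 : RInt Bd 0 Rr = (1+4*a)*(1+8*a)*(a/4 + 5*a^2/16)).
        { rewrite (int_poly _ (fun s => (1+4*a)*(1+8*a)*(4*PI/3)*(s^2/2 + 5*PI/3*s^4))).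
          match goal with |- ?x = ?y => change (@eq R x y) end. unfold a. field.
          intros x. unfold Bd. auto_derive; auto. simpl. field.
          intros x. unfold Bd. repeat (first [ apply cc | apply cid | apply cdiv | apply cadd | apply cmul | apply cpow ]).
          intro; lra. }
        assert (P4 : (1+4*a)*(1+8*a)*(a/4 + 5*a^2/16) <= 2*a).
        { assert (Q : (1+4*a)*(1+8*a)*(/4 + 5*a/16) <= 2).
          { assert ((1+4*a) <= 2) by lra. assert ((1+8*a) <= 3) by lra.
            assert (/4 + 5*a/16 <= 21/64) by lra.
            assert (0 <= (1+4*a)*(1+8*a)) by nra.
            assert ((1+4*a)*(1+8*a) <= 6) by nra.
            assert ((1+4*a)*(1+8*a)*(/4 + 5*a/16) <= 6 * (21/64)).
            { apply Rmult_le_compat; lra. }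
            lra. }
          replace ((1+4*a)*(1+8*a)*(a/4 + 5*a^2/16)) with (a*((1+4*a)*(1+8*a)*(/4 + 5*a/16))) by field.
          nra. }
        rewrite Hrs. lra.
Qed.
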